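(* Consider the local public good game described in the context and suppose $\gamma_i'(W)\in(0,1)$ for all $i\in N$ and all $W$, and that a sociable Nash equilibrium $(x^*,y^*,g^* )$ with non-empty $g^*$ exists. Then the efficient solution can be implemented as a Nash equilibrium by fixing a personalized price of the public good $p_x\in(0,1)$ for the hub $h$ of the efficient star, financed by lump-sum taxes $\tau_1,\dots,\tau_n$ levied on players, with $\sum_i\tau_i=(1-p_x)x_h$.
   Context: There is a finite set of players $N=\{1,\dots,n\}$. Each player $i$ chooses a public good provision $x_i\ge 0$, a private good consumption $y_i\ge 0$, and links $g_i\in\{0,1\}^n$ with $g_{ii}=0$; $g_{ij}=1$ means $i$ links to $j$. Let $\eta_i(g)=|\{j:g_{ij}=1\}|$. Each link costs its sponsor $k>0$. Player $i$'s public good consumption is $\bar x_i=x_i+\sum_jg_{ij}x_j$. Player $i$ maximizes $U_i(\bar x_i,y_i)$ subject to $x_i+p_iy_i+\eta_i(g)k=w_i$, where $w_i>0$, $p_i>0$, and $U_i$ is twice continuously differentiable, strictly concave and increasing in both arguments. The Engel curve $\gamma_i$ gives, for income $W$, the public good consumption maximizing $U_i(\bar x,y)$ subject to $\bar x+p_iy=W$; it is continuously differentiable. A Nash equilibrium is a profile in which each player's strategy solves her maximization problem given the others'; it is sociable if any player who is indifferent between establishing a link or not establishes it. The efficient solution maximizes $\sum_iU_i(\bar x_i,y_i)$ subject to $\sum_i(x_i+p_iy_i+\eta_i(g)k)\le\sum_iw_i$; its network is empty or a star (a hub $h$ to which other connected players link) in which only the hub provides the public good, possibly with isolated players. Under the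 policy, the hub's budget becomes $p_xx_h+p_hy_h+\eta_h(g)k=w_h-\tau_h$ and every other player's becomes $x_i+p_iy_i+\eta_i(g)k=w_i-\tau_i$. *)

(* Defs.v *)
From Stdlib Require Import Reals Lra List.
From Coquelicot Require Import Coquelicot.
Open Scope R_scope.

(** Players are the naturals 0, ..., n-1. *)

Definition sumN (n : nat) (f : nat -> R) : R :=
  fold_right Rplus 0 (map f (List.seq 0 n)).

Definition nlinks (n : nat) (gi : nat -> bool) : R :=
  sumN n (fun j => if gi j then 1 else 0).

Definition util (n : nat) (U : nat -> R -> R -> R) (x : nat -> R) (i : nat)
    (xi yi : R) (gi : nat -> bool) : R :=
  U i (xi + sumN n (fun j => if gi j then x j else 0)) yi.

(** Feasible strategy of player i for the budget
      c_i * x_i + p_i * y_i + eta_i(g) * k = m_i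
    (original game: c_i = 1, m_i = w_i; policy: c_h = p_x, m_i = w_i - tau_i). *)
Definition feasible (n : nat) (p : nat -> R) (k : R) (c m : nat -> R) (i : nat)
    (xi yi : R) (gi : nat -> bool) : Prop :=
  0 <= xi /\ 0 <= yi /\ gi i = false /\
  c i * xi + p i * yi + nlinks n gi * k = m i.

Definition is_NE (n : nat) (U : nat -> R -> R -> R) (p : nat -> R) (k : R)
    (c m : nat -> R) (x y : nat -> R) (g : nat -> nat -> bool) : Prop :=
  forall i, (i < n)%nat ->
    feasible n p k c m i (x i) (y i) (g i) /\
    forall xi yi gi, feasible n p k c m i xi yi gi ->
      util n U x i xi yi gi <= util n U x i (x i) (y i) (g i).

(** Sociable Nash equilibrium: a player who is indifferent between establishing
    a link or not establishes it; i.e. if g_ij = 0 then no feasible strategy of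
    i containing the link ij does as well as her equilibrium strategy. *)
Definition is_sociable_NE (n : nat) (U : nat -> R -> R -> R) (p : nat -> R) (k : R)
    (c m : nat -> R) (x y : nat -> R) (g : nat -> nat -> bool) : Prop :=
  is_NE n U p k c m x y g /\
  forall i j, (i < n)%nat -> (j < n)%nat -> j <> i -> g i j = false ->
    forall xi yi gi, feasible n p k c m i xi yi gi -> gi j = true ->
      util n U x i xi yi gi < util n U x i (x i) (y i) (g i).

Definition admissible (n : nat) (x y : nat -> R) (g : nat -> nat -> bool) : Prop :=
  forall i, (i < n)%nat -> 0 <= x i /\ 0 <= y i /\ g i i = false.

Definition agg_feasible (n : nat) (p w : nat -> R) (k : R)
    (x y : nat -> R) (g : nat -> nat -> bool) : Prop :=
  sumN n (fun i => x i + p i * y i + nlinks n (g i) * k) <= sumN n w.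

Definition welfare (n : nat) (U : nat -> R -> R -> R) (x y : nat -> R)
    (g : nat -> nat -> bool) : R :=
  sumN n (fun i => util n U x i (x i) (y i) (g i)).

Definition is_efficient (n : nat) (U : nat -> R -> R -> R) (p w : nat -> R) (k : R)
    (x y : nat -> R) (g : nat -> nat -> bool) : Prop :=
  admissible n x y g /\ agg_feasible n p w k x y g /\
  forall x' y' g', admissible n x' y' g' -> agg_feasible n p w k x' y' g' ->
    welfare n U x' y' g' <= welfare n U x y g.

Definition nonempty_net (n : nat) (g : nat -> nat -> bool) : Prop :=
  exists i j, (i < n)%nat /\ (j < n)%nat /\ g i j = true.

Definition star_hub (n : nat) (g : nat -> nat -> bool) (h : nat) : Prop :=
  (h < n)%nat /\
  (exists i, (i < n)%nat /\ g i h = true) /\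
  (forall i j, (i < n)%nat -> (j < n)%nat -> g i j = true -> j = h).

Definition D1 (f : R -> R -> R) : R -> R -> R := fun s t => Derive (fun u => f u t) s.
Definition D2 (f : R -> R -> R) : R -> R -> R := fun s t => Derive (fun u => f s u) t.

Definition has_partials (f : R -> R -> R) (a b : R) : Prop :=
  ex_derive (fun u => f u b) a /\ ex_derive (fun u => f a u) b.

Definition cont2 (f : R -> R -> R) (a b : R) : Prop :=
  continuous (fun z : R * R => f (fst z) (snd z)) (a, b).

Definition C2_pos (f : R -> R -> R) : Prop :=
  forall a b, 0 < a -> 0 < b ->
    has_partials f a b /\ has_partials (D1 f) a b /\ has_partials (D2 f) a b /\
    cont2 f a b /\ cont2 (D1 f) a b /\ cont2 (D2 f) a b /\
    cont2 (D1 (D1 f)) a b /\ cont2 (D2 (D1 f)) a b /\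
    cont2 (D1 (D2 f)) a b /\ cont2 (D2 (D2 f)) a b.

Definition strictly_concave (f : R -> R -> R) : Prop :=
  forall a b c d t, 0 <= a -> 0 <= b -> 0 <= c -> 0 <= d -> (a, b) <> (c, d) ->
    0 < t < 1 ->
    t * f a b + (1 - t) * f c d < f (t * a + (1 - t) * c) (t * b + (1 - t) * d).

Definition increasing2 (f : R -> R -> R) : Prop :=
  (forall a a' b, 0 <= a -> a < a' -> 0 <= b -> f a b < f a' b) /\
  (forall a b b', 0 <= a -> 0 <= b -> b < b' -> f a b < f a b').

Definition is_engel (f : R -> R -> R) (q : R) (gam : R -> R) : Prop :=
  forall W, 0 < W ->
    0 <= gam W /\ gam W <= W /\
    forall xb yb, 0 <= xb -> 0 <= yb -> xb + q * yb = W ->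
      f xb yb <= f (gam W) ((W - gam W) / q).

Definition C1_slope01 (gam : R -> R) : Prop :=
  exists dgam : R -> R,
    forall W, 0 < W ->
      is_derive gam W (dgam W) /\ continuous dgam W /\ 0 < dgam W < 1.

(* Main.v *)
Require Import Defs.
From Stdlib Require Import Reals Lra List Lia Psatz Classical.
From Coquelicot Require Import Coquelicot.
Open Scope R_scope.

Lemma fold_plus_c (l : list R) (c : R) :
  fold_right Rplus c l = fold_right Rplus 0 l + c.
Proof. induction l; simpl; [lra| rewrite IHl; lra]. Qed.

Lemma sumN_0 f : sumN 0 f = 0.
Proof. reflexivity. Qed.

Lemma sumN_S n f : sumN (S n) f = sumN n f + f n.
Proof.
  unfold sumN. rewrite seq_S, map_app, fold_right_app. simpl.
  rewrite fold_plus_c. lra.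
Qed.

Lemma sumN_ext n f g : (forall i, (i < n)%nat -> f i = g i) -> sumN n f = sumN n g.
Proof.
  induction n; intros H; [reflexivity|]. rewrite !sumN_S, IHn, H; auto; lia.
Qed.

Lemma sumN_plus n f g : sumN n (fun i => f i + g i) = sumN n f + sumN n g.
Proof. induction n; [simpl; unfold sumN; simpl; lra|]. rewrite !sumN_S, IHn; lra. Qed.

Lemma sumN_minus n f g : sumN n (fun i => f i - g i) = sumN n f - sumN n g.
Proof. induction n; [unfold sumN; simpl; lra|]. rewrite !sumN_S, IHn; lra. Qed.

Lemma sumN_scal n c f : sumN n (fun i => c * f i) = c * sumN n f.
Proof. induction n; [unfold sumN; simpl; lra|]. rewrite !sumN_S, IHn; lra. Qed.

Lemma sumN_le n f g : (forall i, (i < n)%nat -> f i <= g i) -> sumN n f <= sumN n g.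
Proof.
  induction n; intros H; [unfold sumN; simpl; lra|]. rewrite !sumN_S.
  assert (f n <= g n) by (apply H; lia). assert (sumN n f <= sumN n g) by (apply IHn; intros; apply H; lia). lra.
Qed.

Lemma sumN_lt n f g i : (forall j, (j < n)%nat -> f j <= g j) -> (i < n)%nat -> f i < g i ->
  sumN n f < sumN n g.
Proof.
  induction n; intros H Hi Hlt; [lia|]. rewrite !sumN_S.
  destruct (Nat.eq_dec i n).
  - subst. assert (sumN n f <= sumN n g) by (apply sumN_le; intros; apply H; lia). lra.
  - assert (sumN n f < sumN n g) by (apply IHn; [intros; apply H; lia| lia | auto]).
    assert (f n <= g n) by (apply H; lia). lra.
Qed.

Lemma sumN_zero n f : (forall i, (i < n)%nat -> f i = 0) -> sumN n f = 0.
Proof.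
  induction n; intros H; [reflexivity|]. rewrite sumN_S, IHn, H; auto; try lra; lia.
Qed.

Lemma sumN_single n f i : (i < n)%nat -> (forall j, (j < n)%nat -> j <> i -> f j = 0) ->
  sumN n f = f i.
Proof.
  induction n; intros Hi H; [lia|]. rewrite sumN_S.
  destruct (Nat.eq_dec i n).
  - subst. rewrite sumN_zero; [lra|]. intros; apply H; lia.
  - rewrite IHn; [| lia | intros; apply H; lia]. rewrite (H n); [lra|lia|auto].
Qed.

Lemma sumN_diff1 n F F' i : (i < n)%nat -> (forall j, (j < n)%nat -> j <> i -> F' j = F j) ->
  sumN n F' = sumN n F + (F' i - F i).
Proof.
  intros Hi H. assert (sumN n (fun j => F' j - F j) = F' i - F i).
  { apply (sumN_single n (fun j => F' j - F j) i); auto. intros; rewrite H; auto; lra. }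
  rewrite sumN_minus in H0. lra.
Qed.

Lemma sumN_diff2 n F F' i j : (i < n)%nat -> (j < n)%nat -> i <> j ->
  (forall l, (l < n)%nat -> l <> i -> l <> j -> F' l = F l) ->
  sumN n F' = sumN n F + (F' i - F i) + (F' j - F j).
Proof.
  intros Hi Hj Hij H.
  set (G := fun l => if Nat.eqb l i then F' l else F l).
  assert (E1 : sumN n G = sumN n F + (G i - F i)).
  { apply sumN_diff1; auto. intros l Hl Hli. unfold G. destruct (Nat.eqb_spec l i); [lia|auto]. }
  assert (E2 : sumN n F' = sumN n G + (F' j - G j)).
  { apply sumN_diff1; auto. intros l Hl Hlj. unfold G. destruct (Nat.eqb_spec l i); [subst; auto|].
    apply H; auto. }
  unfold G in E1, E2. rewrite Nat.eqb_refl in E1. destruct (Nat.eqb_spec j i); [lia|]. lra.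
Qed.

Lemma conc_w f : strictly_concave f -> forall x1 y1 x2 y2 l,
  0 <= x1 -> 0 <= y1 -> 0 <= x2 -> 0 <= y2 -> 0 <= l <= 1 ->
  l * f x1 y1 + (1 - l) * f x2 y2 <= f (l * x1 + (1 - l) * x2) (l * y1 + (1 - l) * y2).
Proof.
  intros Hc x1 y1 x2 y2 l H1 H2 H3 H4 Hl.
  destruct (Req_dec l 0) as [->|H0].
  { replace (0 * x1 + (1 - 0) * x2) with x2 by ring.
    replace (0 * y1 + (1 - 0) * y2) with y2 by ring. lra. }
  destruct (Req_dec l 1) as [->|H1'].
  { replace (1 * x1 + (1 - 1) * x2) with x1 by ring.
    replace (1 * y1 + (1 - 1) * y2) with y1 by ring. lra. }
  destruct (Req_dec x1 x2) as [->|Hx]; [destruct (Req_dec y1 y2) as [->|Hy]|].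
  - replace (l * x2 + (1 - l) * x2) with x2 by ring.
    replace (l * y2 + (1 - l) * y2) with y2 by ring. lra.
  - apply Rlt_le, Hc; auto; [congruence|lra].
  - apply Rlt_le, Hc; auto; [congruence|lra].
Qed.

Lemma incx_w f : increasing2 f -> forall a a' b, 0 <= a -> a <= a' -> 0 <= b -> f a b <= f a' b.
Proof.
  intros [Hx Hy] a a' b H1 H2 H3. destruct (Req_dec a a') as [->|]; [lra|].
  apply Rlt_le, Hx; auto; lra.
Qed.

Lemma incy_w f : increasing2 f -> forall a b b', 0 <= a -> 0 <= b -> b <= b' -> f a b <= f a b'.
Proof.
  intros [Hx Hy] a b b' H1 H2 H3. destruct (Req_dec b b') as [->|]; [lra|].
  apply Rlt_le, Hy; auto; lra.
Qed.

Lemma chord_y f : strictly_concave f -> forall X u v w, 0 <= X -> 0 <= u -> u < v -> v < w ->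
  f X u * (w - v) + f X w * (v - u) <= f X v * (w - u).
Proof.
  intros Hc X u v w HX Hu Huv Hvw.
  set (l := (w - v) / (w - u)).
  assert (Hl : 0 <= l <= 1).
  { unfold l; split; [apply Rdiv_le_0_compat; lra|].
    apply (Rmult_le_reg_r (w-u)); [lra|]. unfold Rdiv. rewrite Rmult_assoc, Rinv_l; lra. }
  pose proof (conc_w f Hc X u X w l HX Hu HX ltac:(lra) Hl) as H.
  replace (l * X + (1 - l) * X) with X in H by ring.
  replace (l * u + (1 - l) * w) with v in H by (unfold l; field; lra).
  apply (Rmult_le_compat_r (w - u)) in H; [|lra].
  replace ((l * f X u + (1 - l) * f X w) * (w - u)) with (f X u * (w - v) + f X w * (v - u)) in H
    by (unfold l; field; lra).
  lra.
Qed.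

Lemma lower_y f : strictly_concave f -> increasing2 f -> forall X y0 c,
  0 <= X -> 0 < y0 -> c < f X y0 -> exists d, 0 < d /\ d <= y0 /\ c < f X (y0 - d).
Proof.
  intros Hc Hi X y0 c HX Hy Hlt.
  assert (HD : f X 0 < f X y0) by (apply (proj2 Hi); lra).
  set (D := f X y0 - f X 0).
  set (r := Rmin (1/2) ((f X y0 - c) / (2 * D))).
  assert (Hr0 : 0 < r) by (unfold r; apply Rmin_glb_lt; [lra| apply Rdiv_lt_0_compat; unfold D; lra]).
  assert (Hr1 : r <= 1/2) by (unfold r; apply Rmin_l).
  assert (Hr2 : r * D <= (f X y0 - c) / 2).
  { assert (r <= (f X y0 - c) / (2 * D)) by (unfold r; apply Rmin_r).
    apply (Rmult_le_compat_r D) in H; [|unfold D; lra].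
    replace ((f X y0 - c) / (2 * D) * D) with ((f X y0 - c)/2) in H by (field; unfold D; lra). lra. }
  exists (r * y0). split; [nra|]. split; [nra|].
  pose proof (conc_w f Hc X y0 X 0 (1 - r) HX ltac:(lra) HX ltac:(lra) ltac:(lra)) as H.
  replace ((1 - r) * X + (1 - (1 - r)) * X) with X in H by ring.
  replace ((1 - r) * y0 + (1 - (1 - r)) * 0) with (y0 - r * y0) in H by ring.
  unfold D in Hr2. lra.
Qed.
Definition Aset (f : R -> R -> R) (a b p q : R) : Prop :=
  exists t, 0 < t /\ 0 <= b - q * t / p /\ f a b < f (a + t) (b - q * t / p).
Definition Bset (f : R -> R -> R) (a b p q : R) : Prop :=
  exists t, 0 < t /\ t <= a /\ f a b < f (a - t) (b + q * t / p).


Lemma A_mono f a b p q q' : increasing2 f -> 0 < a -> 0 < p -> q' <= q ->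
  Aset f a b p q -> Aset f a b p q'.
Proof.
  intros Hi Ha Hp Hq [t [Ht [Hy Hf]]]. exists t.
  assert (E : b - q' * t / p = (b - q * t / p) + (q - q') * (t / p)) by (field; lra).
  assert (0 <= (q - q') * (t / p)) by (apply Rmult_le_pos; [lra| apply Rlt_le, Rdiv_lt_0_compat; lra]).
  split; auto. split; [lra|]. eapply Rlt_le_trans; [apply Hf|].
  apply incy_w; auto; lra.
Qed.

Lemma B_mono f a b p q q' : increasing2 f -> 0 < p -> 0 <= b -> 0 <= q -> q <= q' ->
  Bset f a b p q -> Bset f a b p q'.
Proof.
  intros Hi Hp Hb Hq0 Hq [t [Ht [Hta Hf]]]. exists t.
  assert (E : b + q' * t / p = (b + q * t / p) + (q' - q) * (t / p)) by (field; lra).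
  assert (0 <= (q' - q) * (t / p)) by (apply Rmult_le_pos; [lra| apply Rlt_le, Rdiv_lt_0_compat; lra]).
  assert (0 <= q * (t / p)) by (apply Rmult_le_pos; [lra| apply Rlt_le, Rdiv_lt_0_compat; lra]).
  assert (q * t / p = q * (t / p)) by (field; lra).
  split; auto. split; auto. eapply Rlt_le_trans; [apply Hf|].
  apply incy_w; auto; lra.
Qed.

Lemma A_shrink f a b p q t s : strictly_concave f -> 0 < a -> 0 <= b -> 0 < p ->
  0 < t -> 0 <= b - q * t / p -> f a b < f (a + t) (b - q * t / p) -> 0 < s -> s <= t ->
  0 <= b - q * s / p /\ f a b < f (a + s) (b - q * s / p).
Proof.
  intros Hc Ha Hb Hp Ht Hy Hf Hs Hst.
  set (l := s / t).
  assert (Hl : 0 < l <= 1).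
  { unfold l; split; [apply Rdiv_lt_0_compat; lra|].
    apply (Rmult_le_reg_r t); [lra|]. unfold Rdiv. rewrite Rmult_assoc, Rinv_l; lra. }
  assert (E : b - q * s / p = l * (b - q * t / p) + (1 - l) * b) by (unfold l; field; lra).
  split.
  - rewrite E. assert (0 <= l * (b - q * t / p)) by (apply Rmult_le_pos; lra).
    assert (0 <= (1 - l) * b) by (apply Rmult_le_pos; lra). lra.
  - pose proof (conc_w f Hc (a + t) (b - q * t / p) a b l ltac:(lra) Hy ltac:(lra) Hb ltac:(lra)) as H.
    replace (l * (a + t) + (1 - l) * a) with (a + s) in H by (unfold l; field; lra).
    rewrite <- E in H. nra.
Qed.

Lemma AB_disj f a b p q : strictly_concave f -> 0 < p -> 0 <= b -> 0 <= q ->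
  Aset f a b p q -> Bset f a b p q -> False.
Proof.
  intros Hc Hp Hb Hq [t1 [Ht1 [Hy1 Hf1]]] [t2 [Ht2 [Ht2a Hf2]]].
  set (l := t2 / (t1 + t2)).
  assert (Hl : 0 < l < 1).
  { unfold l; split; [apply Rdiv_lt_0_compat; lra|].
    apply (Rmult_lt_reg_r (t1 + t2)); [lra|]. unfold Rdiv. rewrite Rmult_assoc, Rinv_l; lra. }
  assert (0 <= q * t2 / p) by (unfold Rdiv; apply Rmult_le_pos; [apply Rmult_le_pos; lra| apply Rlt_le, Rinv_0_lt_compat; lra]).
  pose proof (conc_w f Hc (a + t1) (b - q * t1 / p) (a - t2) (b + q * t2 / p) l
     ltac:(lra) Hy1 ltac:(lra) ltac:(lra) ltac:(lra)) as HH.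
  replace (l * (a + t1) + (1 - l) * (a - t2)) with a in HH by (unfold l; field; lra).
  replace (l * (b - q * t1 / p) + (1 - l) * (b + q * t2 / p)) with b in HH by (unfold l; field; lra).
  nra.
Qed.

Lemma A_open f a b p q : strictly_concave f -> increasing2 f -> 0 < a -> 0 < b -> 0 < p -> 0 <= q ->
  Aset f a b p q -> exists e, 0 < e /\ Aset f a b p (q + e).
Proof.
  intros Hc Hi Ha Hb Hp Hq [t [Ht [Hy Hf]]].
  destruct (A_shrink f a b p q t (t/2) Hc Ha ltac:(lra) Hp Ht Hy Hf ltac:(lra) ltac:(lra)) as [Hy2 Hf2].
  assert (Hy0 : 0 < b - q * (t / 2) / p).
  { replace (b - q * (t / 2) / p) with ((b + (b - q * t / p)) / 2) by (field; lra). lra. }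
  destruct (lower_y f Hc Hi (a + t/2) _ _ ltac:(lra) Hy0 Hf2) as [d [Hd [Hdy Hfd]]].
  exists (d * p / (t / 2)). split; [apply Rdiv_lt_0_compat; [apply Rmult_lt_0_compat|]; lra|].
  exists (t / 2). split; [lra|].
  replace (b - (q + d * p / (t / 2)) * (t / 2) / p) with (b - q * (t / 2) / p - d) by (field; lra).
  split; [lra | auto].
Qed.

Lemma B_open f a b p q : strictly_concave f -> increasing2 f -> 0 <= b -> 0 < p -> 0 < q ->
  Bset f a b p q -> exists e, 0 < e /\ e <= q / 2 /\ Bset f a b p (q - e).
Proof.
  intros Hc Hi Hb Hp Hq [t [Ht [Hta Hf]]].
  assert (Hy0 : 0 < b + q * t / p).
  { assert (0 < q * t / p) by (apply Rdiv_lt_0_compat; [apply Rmult_lt_0_compat|]; lra). lra. }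
  destruct (lower_y f Hc Hi (a - t) _ _ ltac:(lra) Hy0 Hf) as [d0 [Hd0 [Hdy0 Hfd0]]].
  assert (Hqt : 0 < q * t / p) by (apply Rdiv_lt_0_compat; [apply Rmult_lt_0_compat|]; lra).
  set (d := Rmin d0 (q * t / p / 2)).
  assert (Hd : 0 < d) by (unfold d; apply Rmin_glb_lt; lra).
  assert (Hdd : d <= d0) by (unfold d; apply Rmin_l).
  assert (Hdq : d <= q * t / p / 2) by (unfold d; apply Rmin_r).
  clearbody d.
  assert (Hfd : f a b < f (a - t) (b + q * t / p - d)).
  { eapply Rlt_le_trans; [apply Hfd0|]. apply incy_w; auto; lra. }
  exists (d * p / t). split; [apply Rdiv_lt_0_compat; [apply Rmult_lt_0_compat|]; lra|].
  split.
  { apply (Rmult_le_reg_r (t / p)); [apply Rdiv_lt_0_compat; lra|].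
    replace (d * p / t * (t / p)) with d by (field; lra).
    replace (q / 2 * (t / p)) with (q * t / p / 2) by (field; lra). lra. }
  exists t. split; [lra|]. split; [lra|].
  replace (b + (q - d * p / t) * t / p) with (b + q * t / p - d) by (field; lra). auto.
Qed.

Lemma B_bound f a b p C : strictly_concave f -> increasing2 f -> 0 < a -> 0 <= b -> 0 < p -> 0 <= C ->
  (forall t, 0 < t -> t <= a -> f (a - t) (b + t / p) <= f a b + t * C) ->
  exists qB, 0 < qB <= 1/2 /\ forall q, 0 < q -> q <= qB -> ~ Bset f a b p q.
Proof.
  intros Hc Hi Ha Hb Hp HC HEm.
  set (m := (f (2 * a) b - f a b) / a).
  set (m2 := (f a b - f (a / 2) b) / (a / 2)).
  assert (Hm : 0 < m) by (unfold m; apply Rdiv_lt_0_compat; [|lra];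
    assert (f a b < f (2 * a) b) by (apply (proj1 Hi); lra); lra).
  assert (Hm2 : 0 < m2) by (unfold m2; apply Rdiv_lt_0_compat; [|lra];
    assert (f (a/2) b < f a b) by (apply (proj1 Hi); lra); lra).
  exists (Rmin (1/2) (m / (C + m2))).
  split; [split; [apply Rmin_glb_lt; [lra| apply Rdiv_lt_0_compat; lra] | apply Rmin_l]|].
  intros q Hq HqB [t [Ht [Hta Hf]]].
  assert (Hq1 : q <= 1/2) by (eapply Rle_trans; [apply HqB| apply Rmin_l]).
  assert (Hq2 : q * (C + m2) <= m).
  { assert (q <= m / (C + m2)) by (eapply Rle_trans; [apply HqB| apply Rmin_r]).
    apply (Rmult_le_compat_r (C + m2)) in H; [|lra].
    replace (m / (C + m2) * (C + m2)) with m in H by (field; lra). lra. }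
  assert (Hqt : 0 < q * t / p) by (apply Rdiv_lt_0_compat; [apply Rmult_lt_0_compat|]; lra).
  pose proof (conc_w f Hc (a - t) (b + q * t / p) (a + t) b (1/2) ltac:(lra) ltac:(lra) ltac:(lra) Hb ltac:(lra)) as H1.
  replace (1 / 2 * (a - t) + (1 - 1 / 2) * (a + t)) with a in H1 by field.
  replace (1 / 2 * (b + q * t / p) + (1 - 1 / 2) * b) with (b + 2 * (q * t / 4) / p) in H1 by (field; lra).
  pose proof (conc_w f Hc a b (2 * a) b (1 - t / a) ltac:(lra) Hb ltac:(lra) Hb) as H2.
  assert (Hta' : 0 <= 1 - t / a <= 1).
  { split; [|assert (0 < t / a) by (apply Rdiv_lt_0_compat; lra); lra].
    assert (t / a <= 1) by (apply (Rmult_le_reg_r a); [lra|]; unfold Rdiv; rewrite Rmult_assoc, Rinv_l; lra). lra. }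
  specialize (H2 Hta').
  replace ((1 - t / a) * a + (1 - (1 - t / a)) * (2 * a)) with (a + t) in H2 by (field; lra).
  replace (1 * b) with b in H2 by ring.
  replace ((1 - t / a) * b + (1 - (1 - t / a)) * b) with b in H2 by ring.
  replace ((1 - t / a) * f a b + (1 - (1 - t / a)) * f (2 * a) b) with (f a b + t * m) in H2 by (unfold m; field; lra).
  set (tau := q * t / 4).
  assert (Htau : 0 < tau) by (unfold tau; nra).
  assert (Htau2 : 4 * tau <= a) by (unfold tau; nra).
  pose proof (conc_w f Hc a (b + 2 * tau / p) (a - 2 * tau) b (1/2) ltac:(lra)) as H3.
  assert (0 < 2 * tau / p) by (apply Rdiv_lt_0_compat; lra).
  specialize (H3 ltac:(lra) ltac:(lra) Hb ltac:(lra)).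
  replace (1 / 2 * a + (1 - 1 / 2) * (a - 2 * tau)) with (a - tau) in H3 by field.
  replace (1 / 2 * (b + 2 * tau / p) + (1 - 1 / 2) * b) with (b + tau / p) in H3 by (field; lra).
  pose proof (HEm tau Htau ltac:(lra)) as H4.
  pose proof (conc_w f Hc a b (a / 2) b (1 - 4 * tau / a) ltac:(lra) Hb ltac:(lra) Hb) as H5.
  assert (H5' : 0 <= 1 - 4 * tau / a <= 1).
  { split; [|assert (0 < 4 * tau / a) by (apply Rdiv_lt_0_compat; lra); lra].
    assert (4 * tau / a <= 1) by (apply (Rmult_le_reg_r a); [lra|]; unfold Rdiv; rewrite Rmult_assoc, Rinv_l; lra). lra. }
  specialize (H5 H5').
  replace ((1 - 4 * tau / a) * a + (1 - (1 - 4 * tau / a)) * (a / 2)) with (a - 2 * tau) in H5 by (field; lra).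
  replace ((1 - 4 * tau / a) * b + (1 - (1 - 4 * tau / a)) * b) with b in H5 by ring.
  replace ((1 - 4 * tau / a) * f a b + (1 - (1 - 4 * tau / a)) * f (a / 2) b) with (f a b - 2 * tau * m2) in H5 by (unfold m2; field; lra).
  assert (Hfin : q * t * (C + m2) <= t * m) by nra.
  unfold tau in *. nra.
Qed.

Lemma A_bound f a b p T g0 : strictly_concave f -> increasing2 f -> 0 < a -> 0 < b -> 0 < p ->
  0 < T -> 0 < g0 ->
  (forall t, 0 < t -> t <= T -> 0 <= b - t / p -> f (a + t) (b - t / p) <= f a b - t * g0) ->
  exists qA, qA < 1 /\ forall q, qA <= q -> ~ Aset f a b p q.
Proof.
  intros Hc Hi Ha Hb Hp HT Hg0 HEp.
  set (K := f (a + T) b - f 0 (b / 4)).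
  assert (HK : 0 < K).
  { unfold K. assert (f 0 b < f (a + T) b) by (apply (proj1 Hi); lra).
    assert (f 0 (b/4) < f 0 b) by (apply (proj2 Hi); lra). lra. }
  set (qA := 1 - g0 * p * b / (4 * K)).
  assert (HqA : 0 < g0 * p * b / (4 * K)) by (apply Rdiv_lt_0_compat; [repeat apply Rmult_lt_0_compat|]; lra).
  assert (Hle1 : forall q, qA <= q -> q <= 1 -> ~ Aset f a b p q).
  { intros q Hq Hq1 [t [Ht [Hy Hf]]].
    set (t1 := Rmin (p * b / 2) T).
    assert (Ht1 : 0 < t1) by (unfold t1; apply Rmin_glb_lt; nra).
    set (s := Rmin t t1).
    assert (Hs : 0 < s) by (unfold s; apply Rmin_glb_lt; lra).
    assert (Hst : s <= t) by (unfold s; apply Rmin_l).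
    assert (Hst1 : s <= t1) by (unfold s; apply Rmin_r).
    assert (HsT : s <= T) by (eapply Rle_trans; [apply Hst1| apply Rmin_r]).
    assert (Hspb : s <= p * b / 2) by (eapply Rle_trans; [apply Hst1| apply Rmin_l]).
    destruct (A_shrink f a b p q t s Hc Ha ltac:(lra) Hp Ht Hy Hf Hs Hst) as [Hy2 Hf2].
    assert (Hsp : s / p <= b / 2).
    { apply (Rmult_le_reg_r p); [lra|]. unfold Rdiv. rewrite Rmult_assoc, Rinv_l; lra. }
    assert (Hsp0 : 0 < s / p) by (apply Rdiv_lt_0_compat; lra).
    pose proof (HEp s Hs HsT ltac:(lra)) as H1.
    assert (Eq : b - q * s / p = (b - s / p) + (1 - q) * (s / p)) by (field; lra).
    assert (He : 0 <= (1 - q) * (s / p)) by (apply Rmult_le_pos; lra).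
    assert (Hkey : (1 - q) * (4 * K) <= g0 * p * b).
    { assert (1 - q <= g0 * p * b / (4 * K)) by (unfold qA in Hq; lra).
      apply (Rmult_le_compat_r (4 * K)) in H; [|lra].
      replace (g0 * p * b / (4 * K) * (4 * K)) with (g0 * p * b) in H by (field; lra). lra. }
    destruct (Req_dec q 1) as [->|Hq1'].
    { rewrite Rmult_1_l in Hf2. assert (0 < s * g0) by (apply Rmult_lt_0_compat; lra). lra. }
    assert (He' : 0 < (1 - q) * (s / p)) by (apply Rmult_lt_0_compat; lra).
    pose proof (chord_y f Hc (a + s) (b / 4) (b - s / p) (b - s / p + (1 - q) * (s / p))
                 ltac:(lra) ltac:(lra) ltac:(lra) ltac:(lra)) as Hch.
    assert (HK1 : f (a + s) (b - s / p) - f (a + s) (b / 4) <= K).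
    { unfold K. assert (f (a + s) (b - s / p) <= f (a + T) (b - s / p)) by (apply incx_w; auto; lra).
      assert (f (a + T) (b - s / p) <= f (a + T) b) by (apply incy_w; auto; lra).
      assert (f 0 (b / 4) <= f (a + s) (b / 4)) by (apply incx_w; auto; lra). lra. }
    assert (HD : f (a + s) (b - s / p) <= f (a + s) (b - s / p + (1 - q) * (s / p)))
      by (apply incy_w; auto; lra).
    assert (Hy1u : b / 4 <= b - s / p - b / 4) by lra.
    rewrite Eq in Hf2.
    assert (H3 : K * ((1 - q) * (s / p)) * 4 <= g0 * b * s).
    { replace (K * ((1 - q) * (s / p)) * 4) with ((1 - q) * (4 * K) * (s / p)) by ring.
      apply Rle_trans with (g0 * p * b * (s / p)); [apply Rmult_le_compat_r; lra|].
      right. field. lra. }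
    revert Hch HK1 HD Hy1u He' H3 Hf2 H1.
    generalize (f (a + s) (b - s / p + (1 - q) * (s / p))) (f (a + s) (b - s / p)) (f (a + s) (b / 4)).
    generalize ((1 - q) * (s / p)) (b - s / p).
    intros y1 e F2 F1 F0 Hch HK1 HD Hy1u He' H3 Hf2 H1.
    replace (e + y1 - e) with y1 in Hch by ring.
    assert (H2a : (F2 - F1) * (b / 4) <= (F2 - F1) * (e - b / 4)) by (apply Rmult_le_compat_l; lra).
    assert (H2b : (F1 - F0) * y1 <= K * y1) by (apply Rmult_le_compat_r; lra).
    assert (H2 : (F2 - F1) * (b / 4) <= K * y1) by nra.
    assert (H4 : F2 - F1 <= g0 * s) by nra.
    lra. }
  exists qA. split; [unfold qA; lra|]. intros q Hq HA.
  destruct (Rle_dec q 1).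
  - exact (Hle1 q Hq r HA).
  - apply (Hle1 1); [unfold qA in *; lra|lra|]. apply (A_mono f a b p q 1); auto; lra.
Qed.

Lemma hub_price f a b p : strictly_concave f -> increasing2 f -> 0 < a -> 0 <= b -> 0 < p ->
  (exists T g0, 0 < T /\ 0 < g0 /\
     forall t, 0 < t -> t <= T -> 0 <= b - t / p -> f (a + t) (b - t / p) <= f a b - t * g0) ->
  (exists C, 0 <= C /\ forall t, 0 < t -> t <= a -> f (a - t) (b + t / p) <= f a b + t * C) ->
  exists q, 0 < q < 1 /\ ~ Aset f a b p q /\ ~ Bset f a b p q.
Proof.
  intros Hc Hi Ha Hb Hp [T [g0 [HT [Hg0 HEp]]]] [C [HC HEm]].
  destruct (B_bound f a b p C Hc Hi Ha Hb Hp HC HEm) as [qB [HqB HnB]].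
  destruct (Req_dec b 0) as [Hb0|Hb0].
  { exists qB. split; [lra|]. split; [|apply HnB; lra].
    intros [t [Ht [Hy _]]]. subst b.
    assert (0 < qB * t / p) by (apply Rdiv_lt_0_compat; [apply Rmult_lt_0_compat|]; lra). lra. }
  assert (Hb' : 0 < b) by lra.
  destruct (A_bound f a b p T g0 Hc Hi Ha Hb' Hp HT Hg0 HEp) as [qA [HqA HnA]].
  destruct (classic (exists q0, 0 <= q0 /\ Aset f a b p q0)) as [[q0 [Hq0 HA0]]|Hno].
  2:{ exists qB. split; [lra|]. split; [|apply HnB; lra].
      intros HA. apply Hno. exists qB. split; [lra|auto]. }
  set (E := fun q => 0 <= q /\ Aset f a b p q).
  assert (HbE : bound E).
  { exists qA. intros q [Hq HAq]. destruct (Rle_dec q qA); auto. exfalso. apply (HnA q); auto; lra. }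
  destruct (completeness E HbE (ex_intro _ q0 (conj Hq0 HA0))) as [s [Hub Hlub]].
  assert (Hs0 : q0 <= s) by (apply Hub; split; auto).
  assert (Hs1 : s <= qA).
  { apply Hlub. intros q [Hq HAq]. destruct (Rle_dec q qA); auto. exfalso. apply (HnA q); auto; lra. }
  assert (HnAs : forall q, 0 <= q -> Aset f a b p q -> exists e, 0 < e /\ q + e <= s).
  { intros q Hq HAq. destruct (A_open f a b p q Hc Hi Ha Hb' Hp Hq HAq) as [e [He HAe]].
    exists e. split; auto. apply Hub. split; [lra|auto]. }
  assert (Hspos : 0 < s).
  { destruct (Rle_dec s 0); [|lra]. assert (q0 = 0) by lra. subst q0.
    destruct (HnAs 0 ltac:(lra) HA0) as [e [He Hse]]. lra. }
  exists s. split; [lra|]. split.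
  - intros HAs. destruct (HnAs s ltac:(lra) HAs) as [e [He Hse]]. lra.
  - intros HBs. destruct (B_open f a b p s Hc Hi Hb Hp Hspos HBs) as [e [He [Hes HBe]]].
    destruct (classic (exists q, E q /\ s - e < q)) as [[q [[Hq HAq] Hqs]]|Hno'].
    + apply (AB_disj f a b p q Hc Hp Hb Hq HAq).
      apply (B_mono f a b p (s - e) q Hi Hp Hb ltac:(lra) ltac:(lra) HBe).
    + assert (s <= s - e); [|lra]. apply Hlub. intros q Hq.
      destruct (Rle_dec q (s - e)); auto. exfalso. apply Hno'. exists q. split; auto; lra.
Qed.

Lemma hub_line f a b p q : increasing2 f -> 0 < a -> 0 <= b -> 0 < p -> 0 < q ->
  ~ Aset f a b p q -> ~ Bset f a b p q ->
  forall t, 0 <= a + t -> 0 <= b - q * t / p -> f (a + t) (b - q * t / p) <= f a b.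
Proof.
  intros Hi Ha Hb Hp Hq HnA HnB t Hat Hy.
  destruct (Rlt_le_dec 0 t) as [Ht|Ht].
  { destruct (Rle_lt_dec (f (a + t) (b - q * t / p)) (f a b)); auto.
    exfalso. apply HnA. exists t. auto. }
  destruct (Req_dec t 0) as [->|Ht0].
  { replace (a + 0) with a by ring. replace (b - q * 0 / p) with b by (field; lra). lra. }
  destruct (Rle_lt_dec (f (a + t) (b - q * t / p)) (f a b)); auto.
  exfalso. apply HnB. exists (- t). split; [lra|]. split; [lra|].
  replace (a - - t) with (a + t) by ring. replace (b + q * - t / p) with (b - q * t / p) by (field; lra).
  auto.
Qed.

Definition Setting n (U : nat -> R -> R -> R) (p w : nat -> R) (k : R) (x y : nat -> R)
  (g : nat -> nat -> bool) (h : nat) : Prop :=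
  0 < k /\ (forall i, (i < n)%nat -> 0 < p i) /\ (forall i, (i < n)%nat -> strictly_concave (U i)) /\
  (forall i, (i < n)%nat -> increasing2 (U i)) /\ is_efficient n U p w k x y g /\ star_hub n g h.

Lemma S_star n U p w k x y g h : Setting n U p w k x y g h ->
  forall i j, (i < n)%nat -> (j < n)%nat -> g i j = true -> j = h.
Proof. intros (_&_&_&_&_&_&_&H). exact H. Qed.

Lemma S_hn n U p w k x y g h : Setting n U p w k x y g h -> (h < n)%nat.
Proof. intros (_&_&_&_&_&H&_&_). exact H. Qed.

Lemma S_adm n U p w k x y g h : Setting n U p w k x y g h ->
  forall i, (i < n)%nat -> 0 <= x i /\ 0 <= y i /\ g i i = false.
Proof. intros (_&_&_&_&(H&_)&_). exact H. Qed.

Lemma S_hub n U p w k x y g h : Setting n U p w k x y g h ->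
  forall m, (m < n)%nat -> g h m = false.
Proof.
  intros HS m Hm. destruct (g h m) eqn:E; auto.
  pose proof (S_star _ _ _ _ _ _ _ _ _ HS h m (S_hn _ _ _ _ _ _ _ _ _ HS) Hm E). subst.
  rewrite (proj2 (proj2 (S_adm _ _ _ _ _ _ _ _ _ HS h Hm))) in E. discriminate.
Qed.

Lemma S_sum n U p w k x y g h : Setting n U p w k x y g h ->
  forall l (v : nat -> R), (l < n)%nat ->
  sumN n (fun m => if g l m then v m else 0) = if g l h then v h else 0.
Proof.
  intros HS l v Hl. apply (sumN_single n (fun m => if g l m then v m else 0) h).
  - apply (S_hn _ _ _ _ _ _ _ _ _ HS).
  - intros m Hm Hmh. destruct (g l m) eqn:E; auto.
    exfalso. apply Hmh. apply (S_star _ _ _ _ _ _ _ _ _ HS l m Hl Hm E).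
Qed.

Lemma S_nl n U p w k x y g h : Setting n U p w k x y g h ->
  forall l, (l < n)%nat -> nlinks n (g l) = if g l h then 1 else 0.
Proof. intros HS l Hl. unfold nlinks. apply (S_sum _ _ _ _ _ _ _ _ _ HS l (fun _ => 1) Hl). Qed.

Lemma S_eff n U p w k x y g h : Setting n U p w k x y g h ->
  forall x' y' g', admissible n x' y' g' -> agg_feasible n p w k x' y' g' ->
  welfare n U x' y' g' <= welfare n U x y g.
Proof. intros (_&_&_&_&(_&_&H)&_). exact H. Qed.

Lemma S_agg n U p w k x y g h : Setting n U p w k x y g h -> agg_feasible n p w k x y g.
Proof. intros (_&_&_&_&(_&H&_)&_). exact H. Qed.

Lemma sum_nonneg n (g : nat -> bool) (v : nat -> R) :
  (forall m, (m < n)%nat -> 0 <= v m) -> 0 <= sumN n (fun m => if g m then v m else 0).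
Proof.
  intros H. apply Rle_trans with (sumN n (fun _ => 0)); [right; symmetry; apply sumN_zero; auto|].
  apply sumN_le.
  intros m Hm. destruct (g m); [apply H; auto| lra].
Qed.

Lemma nl_false n : nlinks n (fun _ => false) = 0.
Proof. unfold nlinks. apply sumN_zero. auto. Qed.

Lemma nl_single n h : (h < n)%nat -> nlinks n (fun m => Nat.eqb m h) = 1.
Proof.
  intros Hh. unfold nlinks. rewrite (sumN_single n _ h Hh).
  - rewrite Nat.eqb_refl. reflexivity.
  - intros j Hj Hjh. destruct (Nat.eqb_spec j h); [lia|auto].
Qed.

Lemma L_bind n U p w k x y g h : Setting n U p w k x y g h ->
  sumN n (fun i => x i + p i * y i + nlinks n (g i) * k) = sumN n w.
Proof.
  intros HS. pose proof (S_agg _ _ _ _ _ _ _ _ _ HS) as Hagg. unfold agg_feasible in Hagg.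
  destruct (Req_dec (sumN n (fun i => x i + p i * y i + nlinks n (g i) * k)) (sumN n w)) as [E|NE]; auto.
  exfalso.
  pose proof HS as (Hk & Hp & Hc & Hi & Heff & Hstar).
  pose proof (S_hn _ _ _ _ _ _ _ _ _ HS) as Hh.
  set (d := sumN n w - sumN n (fun i => x i + p i * y i + nlinks n (g i) * k)).
  assert (Hd : 0 < d) by (unfold d; lra).
  set (y' := fun i => if Nat.eqb i h then y h + d / p h else y i).
  assert (Hph := Hp h Hh).
  assert (Hadm : admissible n x y' g).
  { intros i Hi'. destruct (S_adm _ _ _ _ _ _ _ _ _ HS i Hi') as (A1&A2&A3). unfold y'.
    destruct (Nat.eqb_spec i h); subst; repeat split; auto.
    assert (0 < d / p h) by (apply Rdiv_lt_0_compat; lra). lra. }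
  assert (Hagg' : agg_feasible n p w k x y' g).
  { unfold agg_feasible.
    rewrite (sumN_diff1 n (fun i => x i + p i * y i + nlinks n (g i) * k) _ h Hh).
    - unfold y'. rewrite Nat.eqb_refl.
      replace (x h + p h * (y h + d / p h) + nlinks n (g h) * k - (x h + p h * y h + nlinks n (g h) * k)) with d
        by (field; lra). unfold d. lra.
    - intros j Hj Hjh. unfold y'. destruct (Nat.eqb_spec j h); [lia|auto]. }
  pose proof (S_eff _ _ _ _ _ _ _ _ _ HS x y' g Hadm Hagg') as Hw.
  unfold welfare, util in Hw.
  rewrite (sumN_diff1 n (fun i => U i (x i + sumN n (fun j => if g i j then x j else 0)) (y i)) _ h Hh) in Hw.
  - unfold y' in Hw. rewrite Nat.eqb_refl in Hw.
    assert (U h (x h + sumN n (fun j => if g h j then x j else 0)) (y h) <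
            U h (x h + sumN n (fun j => if g h j then x j else 0)) (y h + d / p h)); [|lra].
    apply (proj2 (Hi h Hh)).
    + pose proof (sum_nonneg n (g h) x (fun m Hm => proj1 (S_adm _ _ _ _ _ _ _ _ _ HS m Hm))).
      pose proof (proj1 (S_adm _ _ _ _ _ _ _ _ _ HS h Hh)). lra.
    + apply (S_adm _ _ _ _ _ _ _ _ _ HS h Hh).
    + assert (0 < d / p h) by (apply Rdiv_lt_0_compat; lra). lra.
  - intros j Hj Hjh. unfold y'. destruct (Nat.eqb_spec j h); [lia|auto].
Qed.

Definition wterm n (U : nat -> R -> R -> R) (x y : nat -> R) (g : nat -> nat -> bool) l :=
  U l (x l + sumN n (fun m => if g l m then x m else 0)) (y l).

Lemma welfare_eq n U x y g : welfare n U x y g = sumN n (wterm n U x y g).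
Proof. reflexivity. Qed.

Lemma spend_eq n p k x y g : sumN n (fun i => x i + p i * y i + nlinks n (g i) * k) =
  sumN n (fun i => x i + p i * y i + nlinks n (g i) * k).
Proof. reflexivity. Qed.

Lemma S_linked n U p w k x y g h : Setting n U p w k x y g h ->
  exists i, (i < n)%nat /\ g i h = true /\ i <> h.
Proof.
  intros HS. pose proof HS as (_&_&_&_&_&_&(i&Hi&Hg)&_). exists i. split; auto. split; auto.
  intros ->. rewrite (S_hub _ _ _ _ _ _ _ _ _ HS h (S_hn _ _ _ _ _ _ _ _ _ HS)) in Hg. discriminate.
Qed.

Lemma S_wterm n U p w k x y g h : Setting n U p w k x y g h -> forall l, (l < n)%nat ->
  wterm n U x y g l = U l (x l + (if g l h then x h else 0)) (y l).
Proof. intros HS l Hl. unfold wterm. rewrite (S_sum _ _ _ _ _ _ _ _ _ HS l x Hl). reflexivity. Qed.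

Lemma L_xh n U p w k x y g h : Setting n U p w k x y g h -> k <= x h.
Proof.
  intros HS. pose proof HS as (Hk & Hp & Hc & Hinc & Heff & Hstar).
  pose proof (S_hn _ _ _ _ _ _ _ _ _ HS) as Hh.
  destruct (S_linked _ _ _ _ _ _ _ _ _ HS) as (i & Hi & Hgi & Hih).
  destruct (Rle_dec k (x h)) as [|Hlt]; auto. exfalso.
  pose proof (Hp i Hi) as Hpi.
  destruct (S_adm _ _ _ _ _ _ _ _ _ HS i Hi) as (Hxi & Hyi & Hgii).
  destruct (S_adm _ _ _ _ _ _ _ _ _ HS h Hh) as (Hxh & Hyh & Hghh).
  set (x' := fun l => if Nat.eqb l i then x i + x h else x l).
  set (y' := fun l => if Nat.eqb l i then y i + (k - x h) / p i else y l).
  set (g' := fun l => if Nat.eqb l i then (fun _ : nat => false) else g l).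
  assert (Ex1 : x' i = x i + x h) by (unfold x'; rewrite Nat.eqb_refl; auto).
  assert (Ey1 : y' i = y i + (k - x h) / p i) by (unfold y'; rewrite Nat.eqb_refl; auto).
  assert (Eg1 : g' i = fun _ => false) by (unfold g'; rewrite Nat.eqb_refl; auto).
  assert (Ex2 : forall l, l <> i -> x' l = x l) by (intros l Hl; unfold x'; destruct (Nat.eqb_spec l i); [lia|auto]).
  assert (Ey2 : forall l, l <> i -> y' l = y l) by (intros l Hl; unfold y'; destruct (Nat.eqb_spec l i); [lia|auto]).
  assert (Eg2 : forall l, l <> i -> g' l = g l) by (intros l Hl; unfold g'; destruct (Nat.eqb_spec l i); [lia|auto]).
  clearbody x' y' g'.
  assert (Hd : 0 < (k - x h) / p i) by (apply Rdiv_lt_0_compat; lra).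
  assert (Hadm : admissible n x' y' g').
  { intros l Hl. destruct (Nat.eq_dec l i) as [->|Hli].
    - rewrite Ex1, Ey1, Eg1. repeat split; lra.
    - rewrite Ex2, Ey2, Eg2 by auto. apply (S_adm _ _ _ _ _ _ _ _ _ HS l Hl). }
  assert (Hagg : agg_feasible n p w k x' y' g').
  { unfold agg_feasible. rewrite (sumN_diff1 n (fun i => x i + p i * y i + nlinks n (g i) * k) _ i Hi).
    - rewrite Ex1, Ey1, Eg1, nl_false, (S_nl _ _ _ _ _ _ _ _ _ HS i Hi), Hgi.
      pose proof (S_agg _ _ _ _ _ _ _ _ _ HS) as Ha. unfold agg_feasible in Ha.
      replace (x i + x h + p i * (y i + (k - x h) / p i) + 0 * k - (x i + p i * y i + 1 * k)) with 0
        by (field; lra). lra.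
    - intros l Hl Hli. rewrite Ex2, Ey2, Eg2; auto. }
  pose proof (S_eff _ _ _ _ _ _ _ _ _ HS x' y' g' Hadm Hagg) as Hw.
  rewrite !welfare_eq in Hw.
  rewrite (sumN_diff1 n (wterm n U x y g) (wterm n U x' y' g') i Hi) in Hw.
  - assert (E1 : wterm n U x' y' g' i = U i (x i + x h) (y i + (k - x h) / p i)).
    { unfold wterm. rewrite Ex1, Ey1, Eg1. rewrite (sumN_zero n (fun m => if false then x' m else 0)) by auto.
      rewrite Rplus_0_r. reflexivity. }
    rewrite E1, (S_wterm _ _ _ _ _ _ _ _ _ HS i Hi), Hgi in Hw.
    assert (U i (x i + x h) (y i) < U i (x i + x h) (y i + (k - x h) / p i)); [|lra].
    apply (proj2 (Hinc i Hi)); lra.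
  - intros l Hl Hli. unfold wterm. rewrite Ex2, Ey2, Eg2 by auto. f_equal. f_equal.
    apply sumN_ext. intros m Hm. destruct (g l m) eqn:E; auto. destruct (Nat.eq_dec m i) as [->|Hmi].
    + exfalso. apply Hih. apply (S_star _ _ _ _ _ _ _ _ _ HS l i Hl Hi E).
    + rewrite Ex2; auto.
Qed.

Lemma S_wt n U p w k x y g h : Setting n U p w k x y g h -> forall v yy l, (l < n)%nat ->
  wterm n U v yy g l = U l (v l + (if g l h then v h else 0)) (yy l).
Proof. intros HS v yy l Hl. unfold wterm. rewrite (S_sum _ _ _ _ _ _ _ _ _ HS l v Hl). reflexivity. Qed.

Lemma wterm_g n U v yy (g g' : nat -> nat -> bool) l : g' l = g l -> wterm n U v yy g' l = wterm n U v yy g l.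
Proof. intros E. unfold wterm. rewrite E. reflexivity. Qed.

Lemma S_incx n U p w k x y g h : Setting n U p w k x y g h -> forall l a a' b, (l < n)%nat ->
  0 <= a -> a <= a' -> 0 <= b -> U l a b <= U l a' b.
Proof. intros HS l a a' b Hl. apply incx_w. pose proof HS as (_&_&_&Hi&_). auto. Qed.

Lemma L_linked0 n U p w k x y g h : Setting n U p w k x y g h ->
  forall j, (j < n)%nat -> g j h = true -> x j = 0.
Proof.
  intros HS j Hj Hgj. pose proof HS as (Hk & Hp & Hc & Hinc & Heff & Hstar).
  pose proof (S_hn _ _ _ _ _ _ _ _ _ HS) as Hh.
  assert (Hjh : j <> h) by (intros ->; rewrite (S_hub _ _ _ _ _ _ _ _ _ HS h Hh) in Hgj; discriminate).
  destruct (S_adm _ _ _ _ _ _ _ _ _ HS j Hj) as (Hxj & Hyj & Hgjj).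
  destruct (S_adm _ _ _ _ _ _ _ _ _ HS h Hh) as (Hxh & Hyh & Hghh).
  destruct (Req_dec (x j) 0) as [|Hne]; auto. exfalso.
  set (x' := fun l => if Nat.eqb l j then 0 else if Nat.eqb l h then x h + x j else x l).
  assert (Ex1 : x' j = 0) by (unfold x'; rewrite Nat.eqb_refl; auto).
  assert (Ex2 : x' h = x h + x j) by (unfold x'; rewrite Nat.eqb_refl; destruct (Nat.eqb_spec h j); [lia|auto]).
  assert (Ex3 : forall l, l <> j -> l <> h -> x' l = x l)
    by (intros l H1 H2; unfold x'; destruct (Nat.eqb_spec l j); [lia|]; destruct (Nat.eqb_spec l h); [lia|auto]).
  clearbody x'.
  assert (Hadm : admissible n x' y g).
  { intros l Hl. destruct (S_adm _ _ _ _ _ _ _ _ _ HS l Hl) as (A1&A2&A3).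
    destruct (Nat.eq_dec l j) as [->|H1]; [rewrite Ex1; repeat split; auto; lra|].
    destruct (Nat.eq_dec l h) as [->|H2]; [rewrite Ex2; repeat split; auto; lra|].
    rewrite Ex3; auto. }
  assert (Hagg : agg_feasible n p w k x' y g).
  { unfold agg_feasible. rewrite (sumN_diff2 n (fun i => x i + p i * y i + nlinks n (g i) * k) _ j h Hj Hh Hjh).
    - rewrite Ex1, Ex2. pose proof (S_agg _ _ _ _ _ _ _ _ _ HS) as Ha. unfold agg_feasible in Ha. lra.
    - intros l Hl H1 H2. rewrite Ex3; auto. }
  pose proof (S_eff _ _ _ _ _ _ _ _ _ HS x' y g Hadm Hagg) as Hw.
  rewrite !welfare_eq in Hw.
  assert (Hlt : sumN n (wterm n U x y g) < sumN n (wterm n U x' y g)); [|lra].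
  apply (sumN_lt n _ _ h).
  - intros l Hl. rewrite !(S_wt _ _ _ _ _ _ _ _ _ HS _ _ l Hl).
    destruct (S_adm _ _ _ _ _ _ _ _ _ HS l Hl) as (A1&A2&A3).
    destruct (Nat.eq_dec l j) as [->|H1].
    + rewrite Ex1, Ex2, Hgj. right. f_equal. ring.
    + destruct (Nat.eq_dec l h) as [->|H2].
      * rewrite Ex2, (S_hub _ _ _ _ _ _ _ _ _ HS h Hh). apply (S_incx _ _ _ _ _ _ _ _ _ HS); auto; lra.
      * rewrite Ex2, Ex3 by auto. apply (S_incx _ _ _ _ _ _ _ _ _ HS); auto; destruct (g l h); lra.
  - auto.
  - rewrite !(S_wt _ _ _ _ _ _ _ _ _ HS _ _ h Hh). rewrite Ex2, (S_hub _ _ _ _ _ _ _ _ _ HS h Hh).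
    apply (proj1 (Hinc h Hh)); lra.
Qed.

Lemma L_xle n U p w k x y g h : Setting n U p w k x y g h ->
  forall j, (j < n)%nat -> j <> h -> x j <= k.
Proof.
  intros HS j Hj Hjh. pose proof HS as (Hk & Hp & Hc & Hinc & Heff & Hstar).
  pose proof (S_hn _ _ _ _ _ _ _ _ _ HS) as Hh.
  destruct (g j h) eqn:Hgj.
  { rewrite (L_linked0 _ _ _ _ _ _ _ _ _ HS j Hj Hgj). lra. }
  destruct (Rle_dec (x j) k) as [|Hgt]; auto. exfalso.
  pose proof (L_xh _ _ _ _ _ _ _ _ _ HS) as Hxhk.
  destruct (S_adm _ _ _ _ _ _ _ _ _ HS j Hj) as (Hxj & Hyj & Hgjj).
  destruct (S_adm _ _ _ _ _ _ _ _ _ HS h Hh) as (Hxh & Hyh & Hghh).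
  pose proof (Hp j Hj) as Hpj.
  set (g' := fun l => if Nat.eqb l j then (fun m => Nat.eqb m h) else g l).
  assert (Eg1 : g' j = fun m => Nat.eqb m h) by (unfold g'; rewrite Nat.eqb_refl; auto).
  assert (Eg2 : forall l, l <> j -> g' l = g l) by (intros l Hl; unfold g'; destruct (Nat.eqb_spec l j); [lia|auto]).
  clearbody g'.
  assert (Hnlj : nlinks n (g' j) = 1) by (rewrite Eg1; apply nl_single; auto).
  assert (Hnlj0 : nlinks n (g j) = 0) by (rewrite (S_nl _ _ _ _ _ _ _ _ _ HS j Hj), Hgj; auto).
  assert (Hsumj : forall v, sumN n (fun m => if g' j m then v m else 0) = v h).
  { intros v. rewrite Eg1. rewrite (sumN_single n _ h Hh).
    - rewrite Nat.eqb_refl; auto.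
    - intros m Hm Hmh. destruct (Nat.eqb_spec m h); [lia|auto]. }
  assert (Hgl_j : forall l, (l < n)%nat -> g l j = false).
  { intros l Hl. destruct (g l j) eqn:E; auto. exfalso. apply Hjh. apply (S_star _ _ _ _ _ _ _ _ _ HS l j Hl Hj E). }
  destruct (Rle_dec (x j) (x h)) as [Hle|Hlt].
  -
    set (x' := fun l => if Nat.eqb l j then 0 else x l).
    set (y' := fun l => if Nat.eqb l j then y j + (x j - k) / p j else y l).
    assert (Ex1 : x' j = 0) by (unfold x'; rewrite Nat.eqb_refl; auto).
    assert (Ey1 : y' j = y j + (x j - k) / p j) by (unfold y'; rewrite Nat.eqb_refl; auto).
    assert (Ex2 : forall l, l <> j -> x' l = x l) by (intros l Hl; unfold x'; destruct (Nat.eqb_spec l j); [lia|auto]).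
    assert (Ey2 : forall l, l <> j -> y' l = y l) by (intros l Hl; unfold y'; destruct (Nat.eqb_spec l j); [lia|auto]).
    clearbody x' y'.
    assert (Hd : 0 < (x j - k) / p j) by (apply Rdiv_lt_0_compat; lra).
    assert (Hadm : admissible n x' y' g').
    { intros l Hl. destruct (Nat.eq_dec l j) as [->|Hl'].
      - rewrite Ex1, Ey1, Eg1. repeat split; try lra. destruct (Nat.eqb_spec j h); [lia|auto].
      - rewrite Ex2, Ey2, Eg2 by auto. apply (S_adm _ _ _ _ _ _ _ _ _ HS l Hl). }
    assert (Hagg : agg_feasible n p w k x' y' g').
    { unfold agg_feasible. rewrite (sumN_diff1 n (fun i => x i + p i * y i + nlinks n (g i) * k) _ j Hj).
      - rewrite Ex1, Ey1, Hnlj, Hnlj0.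
        pose proof (S_agg _ _ _ _ _ _ _ _ _ HS) as Ha. unfold agg_feasible in Ha.
        replace (0 + p j * (y j + (x j - k) / p j) + 1 * k - (x j + p j * y j + 0 * k)) with 0
          by (field; lra). lra.
      - intros l Hl Hlj. rewrite Ex2, Ey2, Eg2; auto. }
    pose proof (S_eff _ _ _ _ _ _ _ _ _ HS x' y' g' Hadm Hagg) as Hw.
    rewrite !welfare_eq in Hw.
    rewrite (sumN_diff1 n (wterm n U x y g) (wterm n U x' y' g') j Hj) in Hw.
    + assert (E1 : wterm n U x' y' g' j = U j (x h) (y j + (x j - k) / p j)).
      { unfold wterm. rewrite Hsumj, Ex1, Ey1, Ex2 by auto. f_equal. ring. }
      rewrite E1, (S_wterm _ _ _ _ _ _ _ _ _ HS j Hj), Hgj, Rplus_0_r in Hw.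
      assert (U j (x j) (y j) < U j (x j) (y j + (x j - k) / p j)) by (apply (proj2 (Hinc j Hj)); lra).
      assert (U j (x j) (y j + (x j - k) / p j) <= U j (x h) (y j + (x j - k) / p j))
        by (apply (S_incx _ _ _ _ _ _ _ _ _ HS); auto; lra).
      lra.
    + intros l Hl Hlj. rewrite (wterm_g n U x' y' g g') by auto.
      rewrite !(S_wt _ _ _ _ _ _ _ _ _ HS _ _ l Hl). rewrite Ex2, Ey2, (Ex2 h) by auto. reflexivity.
  -
    set (x' := fun l => if Nat.eqb l j then 0 else if Nat.eqb l h then x j else x l).
    assert (Ex1 : x' j = 0) by (unfold x'; rewrite Nat.eqb_refl; auto).
    assert (Ex2 : x' h = x j) by (unfold x'; rewrite Nat.eqb_refl; destruct (Nat.eqb_spec h j); [lia|auto]).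
    assert (Ex3 : forall l, l <> j -> l <> h -> x' l = x l)
      by (intros l H1 H2; unfold x'; destruct (Nat.eqb_spec l j); [lia|]; destruct (Nat.eqb_spec l h); [lia|auto]).
    clearbody x'.
    assert (Hadm : admissible n x' y g').
    { intros l Hl. destruct (S_adm _ _ _ _ _ _ _ _ _ HS l Hl) as (A1&A2&A3).
      destruct (Nat.eq_dec l j) as [->|H1].
      - rewrite Ex1, Eg1. repeat split; try lra. destruct (Nat.eqb_spec j h); [lia|auto].
      - rewrite Eg2 by auto. destruct (Nat.eq_dec l h) as [->|H2]; [rewrite Ex2; repeat split; auto; lra|].
        rewrite Ex3; auto. }
    assert (Hagg : agg_feasible n p w k x' y g').
    { unfold agg_feasible. rewrite (sumN_diff2 n (fun i => x i + p i * y i + nlinks n (g i) * k) _ j h Hj Hh Hjh).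
      - rewrite Ex1, Ex2, Hnlj, Hnlj0, (Eg2 h) by auto.
        pose proof (S_agg _ _ _ _ _ _ _ _ _ HS) as Ha. unfold agg_feasible in Ha. lra.
      - intros l Hl H1 H2. rewrite Ex3, Eg2; auto. }
    pose proof (S_eff _ _ _ _ _ _ _ _ _ HS x' y g' Hadm Hagg) as Hw.
    rewrite !welfare_eq in Hw.
    assert (Hlt2 : sumN n (wterm n U x y g) < sumN n (wterm n U x' y g')); [|lra].
    apply (sumN_lt n _ _ h).
    + intros l Hl. destruct (S_adm _ _ _ _ _ _ _ _ _ HS l Hl) as (A1&A2&A3).
      destruct (Nat.eq_dec l j) as [->|H1].
      * unfold wterm at 2. rewrite Hsumj, Ex1, Ex2. rewrite (S_wterm _ _ _ _ _ _ _ _ _ HS j Hj), Hgj.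
        right. f_equal. ring.
      * rewrite (wterm_g n U x' y g g') by auto.
        rewrite (S_wterm _ _ _ _ _ _ _ _ _ HS l Hl), (S_wt _ _ _ _ _ _ _ _ _ HS _ _ l Hl), Ex2.
        destruct (Nat.eq_dec l h) as [->|H2].
        -- rewrite Ex2. apply (S_incx _ _ _ _ _ _ _ _ _ HS); auto; destruct (g h h); lra.
        -- rewrite Ex3 by auto. apply (S_incx _ _ _ _ _ _ _ _ _ HS); auto; destruct (g l h); lra.
    + auto.
    + rewrite (wterm_g n U x' y g g') by auto.
      rewrite (S_wterm _ _ _ _ _ _ _ _ _ HS h Hh), (S_wt _ _ _ _ _ _ _ _ _ HS _ _ h Hh), Ex2, Hghh.
      apply (proj1 (Hinc h Hh)); lra.
Qed.

Lemma L_nonhub n U p w k x y g h : Setting n U p w k x y g h ->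
  forall i, (i < n)%nat -> i <> h -> forall xi yi gi, 0 <= xi -> 0 <= yi -> gi i = false ->
  xi + p i * yi + nlinks n gi * k = x i + p i * y i + nlinks n (g i) * k ->
  util n U x i xi yi gi <= util n U x i (x i) (y i) (g i).
Proof.
  intros HS i Hi Hih xi yi gi Hxi Hyi Hgii Hbud.
  pose proof (S_hn _ _ _ _ _ _ _ _ _ HS) as Hh.
  set (x' := fun l => if Nat.eqb l i then xi else x l).
  set (y' := fun l => if Nat.eqb l i then yi else y l).
  set (g' := fun l => if Nat.eqb l i then gi else g l).
  assert (Ex1 : x' i = xi) by (unfold x'; rewrite Nat.eqb_refl; auto).
  assert (Ey1 : y' i = yi) by (unfold y'; rewrite Nat.eqb_refl; auto).
  assert (Eg1 : g' i = gi) by (unfold g'; rewrite Nat.eqb_refl; auto).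
  assert (Ex2 : forall l, l <> i -> x' l = x l) by (intros l Hl; unfold x'; destruct (Nat.eqb_spec l i); [lia|auto]).
  assert (Ey2 : forall l, l <> i -> y' l = y l) by (intros l Hl; unfold y'; destruct (Nat.eqb_spec l i); [lia|auto]).
  assert (Eg2 : forall l, l <> i -> g' l = g l) by (intros l Hl; unfold g'; destruct (Nat.eqb_spec l i); [lia|auto]).
  clearbody x' y' g'.
  assert (Hadm : admissible n x' y' g').
  { intros l Hl. destruct (Nat.eq_dec l i) as [->|Hli].
    - rewrite Ex1, Ey1, Eg1. auto.
    - rewrite Ex2, Ey2, Eg2 by auto. apply (S_adm _ _ _ _ _ _ _ _ _ HS l Hl). }
  assert (Hagg : agg_feasible n p w k x' y' g').
  { unfold agg_feasible. rewrite (sumN_diff1 n (fun i => x i + p i * y i + nlinks n (g i) * k) _ i Hi).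
    - rewrite Ex1, Ey1, Eg1, Hbud.
      pose proof (S_agg _ _ _ _ _ _ _ _ _ HS) as Ha. unfold agg_feasible in Ha. lra.
    - intros l Hl Hli. rewrite Ex2, Ey2, Eg2; auto. }
  pose proof (S_eff _ _ _ _ _ _ _ _ _ HS x' y' g' Hadm Hagg) as Hw.
  rewrite !welfare_eq in Hw.
  rewrite (sumN_diff1 n (wterm n U x y g) (wterm n U x' y' g') i Hi) in Hw.
  - assert (E1 : wterm n U x' y' g' i = util n U x i xi yi gi).
    { unfold wterm, util. rewrite Ex1, Ey1, Eg1. f_equal. f_equal. apply sumN_ext.
      intros m Hm. destruct (Nat.eq_dec m i) as [->|Hmi]; [rewrite Hgii; auto|rewrite Ex2; auto]. }
    rewrite E1 in Hw. change (wterm n U x y g i) with (util n U x i (x i) (y i) (g i)) in Hw. lra.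
  - intros l Hl Hli. rewrite (wterm_g n U x' y' g g') by auto.
    rewrite !(S_wt _ _ _ _ _ _ _ _ _ HS _ _ l Hl). rewrite Ex2, Ey2, (Ex2 h) by auto. reflexivity.
Qed.

Definition Dh (n : nat) (U : nat -> R -> R -> R) (x y : nat -> R) (g : nat -> nat -> bool) h (s : R) l :=
  if Nat.eqb l h then 0 else
  U l (x l + (if g l h then x h + s else 0)) (y l) - U l (x l + (if g l h then x h else 0)) (y l).

Lemma L_alt n U p w k x y g h : Setting n U p w k x y g h ->
  forall s, - x h <= s -> 0 <= y h - s / p h ->
  U h (x h + s) (y h - s / p h) - U h (x h) (y h) + sumN n (Dh n U x y g h s) <= 0.
Proof.
  intros HS s Hs1 Hs2. pose proof HS as (Hk & Hp & Hc & Hinc & Heff & Hstar).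
  pose proof (S_hn _ _ _ _ _ _ _ _ _ HS) as Hh. pose proof (Hp h Hh) as Hph.
  destruct (S_adm _ _ _ _ _ _ _ _ _ HS h Hh) as (Hxh & Hyh & Hghh).
  set (x' := fun l => if Nat.eqb l h then x h + s else x l).
  set (y' := fun l => if Nat.eqb l h then y h - s / p h else y l).
  assert (Ex1 : x' h = x h + s) by (unfold x'; rewrite Nat.eqb_refl; auto).
  assert (Ey1 : y' h = y h - s / p h) by (unfold y'; rewrite Nat.eqb_refl; auto).
  assert (Ex2 : forall l, l <> h -> x' l = x l) by (intros l Hl; unfold x'; destruct (Nat.eqb_spec l h); [lia|auto]).
  assert (Ey2 : forall l, l <> h -> y' l = y l) by (intros l Hl; unfold y'; destruct (Nat.eqb_spec l h); [lia|auto]).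
  clearbody x' y'.
  assert (Hadm : admissible n x' y' g).
  { intros l Hl. destruct (Nat.eq_dec l h) as [->|Hlh].
    - rewrite Ex1, Ey1. repeat split; auto; lra.
    - rewrite Ex2, Ey2 by auto. apply (S_adm _ _ _ _ _ _ _ _ _ HS l Hl). }
  assert (Hagg : agg_feasible n p w k x' y' g).
  { unfold agg_feasible. rewrite (sumN_diff1 n (fun i => x i + p i * y i + nlinks n (g i) * k) _ h Hh).
    - rewrite Ex1, Ey1.
      pose proof (S_agg _ _ _ _ _ _ _ _ _ HS) as Ha. unfold agg_feasible in Ha.
      replace (x h + s + p h * (y h - s / p h) + nlinks n (g h) * k - (x h + p h * y h + nlinks n (g h) * k))
        with 0 by (field; lra). lra.
    - intros l Hl Hlh. rewrite Ex2, Ey2; auto. }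
  pose proof (S_eff _ _ _ _ _ _ _ _ _ HS x' y' g Hadm Hagg) as Hw.
  rewrite !welfare_eq in Hw.
  set (F := fun l => wterm n U x y g l + Dh n U x y g h s l).
  rewrite (sumN_diff1 n F (wterm n U x' y' g) h Hh) in Hw.
  - unfold F in Hw. rewrite sumN_plus in Hw.
    rewrite (S_wt _ _ _ _ _ _ _ _ _ HS _ _ h Hh), (S_wterm _ _ _ _ _ _ _ _ _ HS h Hh) in Hw.
    unfold Dh at 2 in Hw. rewrite Nat.eqb_refl, Hghh, Ex1, Ey1, !Rplus_0_r in Hw. lra.
  - intros l Hl Hlh. unfold F, Dh. destruct (Nat.eqb_spec l h); [lia|].
    rewrite (S_wt _ _ _ _ _ _ _ _ _ HS _ _ l Hl), (S_wterm _ _ _ _ _ _ _ _ _ HS l Hl), Ex1, Ex2, Ey2 by auto.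
    ring.
Qed.

Lemma Dh_conc n U p w k x y g h : Setting n U p w k x y g h ->
  forall s lam, - x h <= s -> 0 <= lam <= 1 ->
  lam * sumN n (Dh n U x y g h s) <= sumN n (Dh n U x y g h (lam * s)).
Proof.
  intros HS s lam Hs Hl. pose proof HS as (Hk & Hp & Hc & Hinc & Heff & Hstar).
  pose proof (S_hn _ _ _ _ _ _ _ _ _ HS) as Hh.
  destruct (S_adm _ _ _ _ _ _ _ _ _ HS h Hh) as (Hxh & Hyh & Hghh).
  rewrite <- sumN_scal. apply sumN_le. intros l Hl'. unfold Dh.
  destruct (Nat.eqb_spec l h); [lra|].
  destruct (S_adm _ _ _ _ _ _ _ _ _ HS l Hl') as (A1 & A2 & A3).
  destruct (g l h); [|lra].
  pose proof (conc_w (U l) (Hc l Hl') (x l + (x h + s)) (y l) (x l + x h) (y l) lam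
    ltac:(lra) A2 ltac:(lra) A2 Hl) as H.
  replace (lam * (x l + (x h + s)) + (1 - lam) * (x l + x h)) with (x l + (x h + lam * s)) in H by ring.
  replace (lam * y l + (1 - lam) * y l) with (y l) in H by ring.
  lra.
Qed.

Lemma L_hub n U p w k x y g h : Setting n U p w k x y g h ->
  (exists T g0, 0 < T /\ 0 < g0 /\
     forall t, 0 < t -> t <= T -> 0 <= y h - t / p h -> U h (x h + t) (y h - t / p h) <= U h (x h) (y h) - t * g0) /\
  (exists C, 0 <= C /\ forall t, 0 < t -> t <= x h -> U h (x h - t) (y h + t / p h) <= U h (x h) (y h) + t * C).
Proof.
  intros HS. pose proof HS as (Hk & Hp & Hc & Hinc & Heff & Hstar).
  pose proof (S_hn _ _ _ _ _ _ _ _ _ HS) as Hh. pose proof (Hp h Hh) as Hph.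
  destruct (S_adm _ _ _ _ _ _ _ _ _ HS h Hh) as (Hxh & Hyh & Hghh).
  pose proof (L_xh _ _ _ _ _ _ _ _ _ HS) as Hxk.
  split.
  - exists 1, (sumN n (Dh n U x y g h 1)). split; [lra|]. split.
    + destruct (S_linked _ _ _ _ _ _ _ _ _ HS) as (i & Hi & Hgi & Hih).
      apply Rle_lt_trans with (sumN n (fun _ => 0)); [right; symmetry; apply sumN_zero; auto|].
      apply (sumN_lt n _ _ i).
      * intros l Hl. unfold Dh. destruct (Nat.eqb_spec l h); [lra|].
        destruct (S_adm _ _ _ _ _ _ _ _ _ HS l Hl) as (A1 & A2 & A3).
        destruct (g l h); [|lra].
        assert (U l (x l + x h) (y l) <= U l (x l + (x h + 1)) (y l)) by (apply (S_incx _ _ _ _ _ _ _ _ _ HS); auto; lra). lra.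
      * auto.
      * unfold Dh. destruct (Nat.eqb_spec i h); [lia|]. rewrite Hgi.
        destruct (S_adm _ _ _ _ _ _ _ _ _ HS i Hi) as (A1 & A2 & A3).
        assert (U i (x i + x h) (y i) < U i (x i + (x h + 1)) (y i)) by (apply (proj1 (Hinc i Hi)); lra). lra.
    + intros t Ht Ht1 Hy.
      pose proof (L_alt _ _ _ _ _ _ _ _ _ HS t ltac:(lra) Hy) as H1.
      pose proof (Dh_conc _ _ _ _ _ _ _ _ _ HS 1 t ltac:(lra) ltac:(lra)) as H2.
      rewrite Rmult_1_r in H2. nra.
  - exists (- sumN n (Dh n U x y g h (- x h)) / x h). split.
    + apply Rdiv_le_0_compat; [|lra].
      assert (sumN n (Dh n U x y g h (- x h)) <= sumN n (fun _ => 0)); [|rewrite (sumN_zero n (fun _ => 0)) in H by (intros; reflexivity); lra].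
      apply sumN_le. intros l Hl. unfold Dh. destruct (Nat.eqb_spec l h); [lra|].
      destruct (S_adm _ _ _ _ _ _ _ _ _ HS l Hl) as (A1 & A2 & A3).
      destruct (g l h); [|lra].
      assert (U l (x l + (x h + - x h)) (y l) <= U l (x l + x h) (y l)) by (apply (S_incx _ _ _ _ _ _ _ _ _ HS); auto; lra). lra.
    + intros t Ht Hta.
      assert (Hy : 0 <= y h - (- t) / p h).
      { replace (y h - - t / p h) with (y h + t / p h) by (field; lra).
        assert (0 < t / p h) by (apply Rdiv_lt_0_compat; lra). lra. }
      pose proof (L_alt _ _ _ _ _ _ _ _ _ HS (- t) ltac:(lra) Hy) as H1.
      pose proof (Dh_conc _ _ _ _ _ _ _ _ _ HS (- x h) (t / x h) ltac:(lra)) as H2.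
      assert (Hl : 0 <= t / x h <= 1).
      { split; [apply Rdiv_le_0_compat; lra|].
        apply (Rmult_le_reg_r (x h)); [lra|]. unfold Rdiv. rewrite Rmult_assoc, Rinv_l; lra. }
      specialize (H2 Hl).
      replace (t / x h * - x h) with (- t) in H2 by (field; lra).
      replace (x h + - t) with (x h - t) in H1 by ring.
      replace (y h - - t / p h) with (y h + t / p h) in H1 by (field; lra).
      replace (t * (- sumN n (Dh n U x y g h (- x h)) / x h)) with (- (t / x h * sumN n (Dh n U x y g h (- x h))))
        by (field; lra).
      lra.
Qed.

Theorem proposition9
  (n : nat) (U : nat -> R -> R -> R) (w p : nat -> R) (k : R)
  (gam : nat -> R -> R)
  (Hk : 0 < k)
  (Hw : forall i, (i < n)%nat -> 0 < w i)
  (Hp : forall i, (i < n)%nat -> 0 < p i)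
  (HU2 : forall i, (i < n)%nat -> C2_pos (U i))
  (HUc : forall i, (i < n)%nat -> strictly_concave (U i))
  (HUi : forall i, (i < n)%nat -> increasing2 (U i))
  (Hgam : forall i, (i < n)%nat -> is_engel (U i) (p i) (gam i))
  (Hgam' : forall i, (i < n)%nat -> C1_slope01 (gam i))
  (HNE : exists xs ys gs,
      is_sociable_NE n U p k (fun _ => 1) w xs ys gs /\ nonempty_net n gs) :
  forall (xe ye : nat -> R) (ge : nat -> nat -> bool) (h : nat),
    is_efficient n U p w k xe ye ge ->
    star_hub n ge h ->
    exists (px : R) (tau : nat -> R),
      0 < px < 1 /\
      sumN n tau = (1 - px) * xe h /\
      is_NE n U p k (fun i => if Nat.eqb i h then px else 1)
                    (fun i => w i - tau i) xe ye ge.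
Proof.
  intros xe ye ge h Heff Hstar.
  assert (HS : Setting n U p w k xe ye ge h) by (exact (conj Hk (conj Hp (conj HUc (conj HUi (conj Heff Hstar)))))).
  pose proof (S_hn _ _ _ _ _ _ _ _ _ HS) as Hh.
  pose proof (L_xh _ _ _ _ _ _ _ _ _ HS) as Hxk.
  destruct (S_adm _ _ _ _ _ _ _ _ _ HS h Hh) as (Hxh & Hyh & Hghh).
  pose proof (Hp h Hh) as Hph.
  destruct (L_hub _ _ _ _ _ _ _ _ _ HS) as [HEp HEm].
  destruct (hub_price (U h) (xe h) (ye h) (p h) (HUc h Hh) (HUi h Hh) ltac:(lra) Hyh Hph HEp HEm)
    as [q [Hq [HnA HnB]]].
  pose proof (hub_line (U h) (xe h) (ye h) (p h) q (HUi h Hh) ltac:(lra) Hyh Hph ltac:(lra) HnA HnB) as Hline.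
  exists q, (fun i => w i - ((if Nat.eqb i h then q else 1) * xe i + p i * ye i + nlinks n (ge i) * k)).
  split; [lra|]. split.
  - rewrite sumN_minus.
    rewrite (sumN_diff1 n (fun i => xe i + p i * ye i + nlinks n (ge i) * k)
      (fun i => (if Nat.eqb i h then q else 1) * xe i + p i * ye i + nlinks n (ge i) * k) h Hh).
    + rewrite (L_bind _ _ _ _ _ _ _ _ _ HS). rewrite Nat.eqb_refl. ring.
    + intros j Hj Hjh. destruct (Nat.eqb_spec j h); [lia|]. ring.
  - intros i Hi. destruct (S_adm _ _ _ _ _ _ _ _ _ HS i Hi) as (Hxi0 & Hyi0 & Hgii0).
    split.
    + unfold feasible. repeat split; auto. ring.
    + intros xi yi gi (Hxi & Hyi & Hgii & Hbud).
      destruct (Nat.eq_dec i h) as [->|Hih].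
      * rewrite Nat.eqb_refl in Hbud.
        rewrite (S_nl _ _ _ _ _ _ _ _ _ HS h Hh), Hghh in Hbud.
        unfold util. rewrite (S_sum _ _ _ _ _ _ _ _ _ HS h xe Hh), Hghh, Rplus_0_r.
        set (S := sumN n (fun j => if gi j then xe j else 0)).
        assert (HS0 : 0 <= S).
        { unfold S. apply sum_nonneg. intros m Hm. apply (S_adm _ _ _ _ _ _ _ _ _ HS m Hm). }
        assert (HSk : S <= k * nlinks n gi).
        { unfold S, nlinks. rewrite <- sumN_scal. apply sumN_le. intros j Hj.
          destruct (gi j) eqn:E; [|lra]. rewrite Rmult_1_r.
          apply (L_xle _ _ _ _ _ _ _ _ _ HS j Hj). intros ->. congruence. }
        assert (Hnl0 : 0 <= nlinks n gi).
        { unfold nlinks. apply Rle_trans with (sumN n (fun _ => 0)); [right; symmetry; apply sumN_zero; auto|].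
          apply sumN_le. intros j Hj. destruct (gi j); lra. }
        clearbody S.
        set (t := xi + S - xe h).
        assert (Hat : 0 <= xe h + t) by (unfold t; lra).
        assert (HqS : q * S <= S) by nra.
        assert (HY : yi <= ye h - q * t / p h).
        { apply (Rmult_le_reg_l (p h)); [lra|].
          replace (p h * (ye h - q * t / p h)) with (p h * ye h - q * t) by (field; lra).
          unfold t. nra. }
        assert (HY0 : 0 <= ye h - q * t / p h) by lra.
        apply Rle_trans with (U h (xe h + t) (ye h - q * t / p h)).
        -- replace (xi + S) with (xe h + t) by (unfold t; ring).
           apply incy_w; auto.
        -- apply Hline; auto.
      * destruct (Nat.eqb_spec i h); [lia|].
        apply (L_nonhub _ _ _ _ _ _ _ _ _ HS i Hi Hih xi yi gi Hxi Hyi Hgii). lra.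
Qed.
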